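(* Let $F$ be a global function field with full constant field $\mathbb{F}_q$, with $n\ge1$ rational places $P_1,\dots,P_n$ and class number $h$; fix an integer $m\ge1$. Let $r\ge s\ge0$ be integers and let $x_1,\dots,x_m\ge0$ be real numbers with $x_1+\cdots+x_m\le1$ such that $|\mathcal{V}_m(r,s;\lfloor x_1n\rfloor,\dots,\lfloor x_mn\rfloor)|<h$. Let $G$ be a divisor of $F$ of degree $r$ with ${\rm supp}(G)\cap\{P_1,\dots,P_n\}=\emptyset$ such that for every $f\in\mathcal{L}(G)\setminus\{0\}$, if $E=(f)_0$ satisfies $j_\ell(E)\le2\lfloor x_\ell n\rfloor+\sum_{\nu=\ell+1}^m\lfloor x_\nu n\rfloor$ for $1\le\ell\le m$ and $J_m(E)\le2\sum_{\ell=1}^m(\ell+1)\lfloor x_\ell n\rfloor$, then $\deg(\overline E)\le s-1$. Assume that $|\mathcal{L}(G)|\cdot|M(x_1,\dots,x_m;\mathbf{0})|>q^{mn}$ and that $(m+1)n\ge s+2\sum_{l=1}^m(l+1)\lfloor x_ln\rfloor$. Let $\mathbf{c}\in\mathbb{F}_q^{mn}$ be such that $N_{\mathbf c}=\{f\in\mathcal{L}(G):\Phi(f)\in M(x_1,\dots,x_m;\mathbf c)\}$ satisfies $|N_{\mathbf c}|\ge|\mathcal{L}(G)|\cdot|M(x_1,\dots,x_m;\mathbf 0)|/q^{mn}$, and let $C=\psi(N_{\mathbf c})\subseteq\mathbb{F}_q^n$. Then $$|C|\ge\Bigl\lceil\frac{|\mathcal{L}(G)|\cdot|M(x_1,\dots,x_m;\mathbf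 0)|}{q^{mn}}\Bigr\rceil\quad\text{and}\quad d(C)\ge(m+1)n+1-s-2\sum_{l=1}^m(l+1)\lfloor x_ln\rfloor.$$
   Context: $v_P$ is the normalized valuation at a place $P$, $v_P(D)$ the coefficient of $P$ in a divisor $D$, $\mathcal{L}(G)=\{f\in F: f=0\text{ or } v_P(f)\ge-v_P(G)\ \forall P\}$, $(f)_0$ the zero divisor of $f$. For a positive divisor $D$: $\overline D=\sum_{i=1}^n\min(m+1,v_{P_i}(D))P_i$; $j_\ell(D)=|\{i: v_{P_i}(D)=m-\ell\}|$ for $0\le\ell\le m$; $J_m(D)=\sum_{\ell=1}^m(\ell+1)j_\ell(D)$. For integers $r\ge s\ge0$ and integers $X_1,\dots,X_m\ge0$, $\mathcal{V}_m(r,s;X_1,\dots,X_m)$ is the set of positive divisors $D$ of $F$ with $\deg D=r$, $\deg\overline D\ge s$, $j_\ell(D)\le2X_\ell+\sum_{\nu=\ell+1}^mX_\nu$ for $1\le\ell\le m$, and $J_m(D)\le2\sum_{\ell=1}^m(\ell+1)X_\ell$. For $\boldsymbol\alpha=(\alpha^{(1)}_1,\dots,\alpha^{(1)}_m,\dots,\alpha^{(n)}_1,\dots,\alpha^{(n)}_m)\in\mathbb{F}_q^{mn}$ and $1\le\ell\le m$, $I_\ell(\boldsymbol\alpha)=\{i\in\{1,\dots,n\}:\alpha^{(i)}_m=\cdots=\alpha^{(i)}_{\ell+1}=0,\ \alpha^{(i)}_\ell\ne0\}$. For $\mathbf c\in\mathbb{F}_q^{mn}$, $M(x_1,\dots,x_m;\mathbf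 c)=\{\boldsymbol\alpha\in\mathbb{F}_q^{mn}:|I_\ell(\boldsymbol\alpha-\mathbf c)|\le\lfloor x_\ell n\rfloor\ \text{for }1\le\ell\le m\}$. For each $i$ let $t_i$ be a local parameter at $P_i$; each $f\in\mathcal{L}(G)$ has a local expansion $f=\sum_{l\ge0}f^{(l)}(P_i)t_i^l$ with $f^{(l)}(P_i)\in\mathbb{F}_q$. $\Phi:\mathcal{L}(G)\to\mathbb{F}_q^{mn}$, $\Phi(f)=(\phi_1(f),\dots,\phi_n(f))$ with $\phi_i(f)=(f^{(m-1)}(P_i),\dots,f^{(1)}(P_i),f^{(0)}(P_i))$; $\psi:\mathcal{L}(G)\to\mathbb{F}_q^n$, $\psi(f)=(f^{(m)}(P_1),\dots,f^{(m)}(P_n))$. $d(C)$ is the minimum Hamming distance of $C$. *)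

(* Defs.v *)
From HB Require Import structures.
From mathcomp Require Import all_boot all_order all_algebra.
From mathcomp Require Import boolp reals.
From mathcomp Require Import finmap.

Set Implicit Arguments.
Unset Strict Implicit.
Unset Printing Implicit Defensive.

Import Order.TTheory GRing.Theory Num.Theory.
Local Open Scope ring_scope.

(* A classical "the natural number k with P k" (0 if none exists). *)
Definition the_nat (Pn : nat -> Prop) : nat :=
  match pselect (exists k, Pn k) with
  | left e => proj1_sig (cid e)
  | right _ => 0%N
  end.

Definition has_card (T : eqType) (A : T -> Prop) (k : nat) : Prop :=
  exists s : seq T, [/\ uniq s, (forall x, x \in s <-> A x) & size s = k].
Definition fincard (T : eqType) (A : T -> Prop) : nat := the_nat (has_card A).

Section FunctionField.
(* F is a field containing the finite field K = F_q through the embedding iota. *)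
Variables (K : finFieldType) (F : fieldType) (iota : {rmorphism K -> F}).

Definition Kpoly_eval (p : {poly K}) (x : F) : F := (map_poly iota p).[x].

Definition transcendental_over_K (x : F) : Prop :=
  forall p : {poly K}, p != 0 -> Kpoly_eval p x != 0.
Definition algebraic_over_K (y : F) : Prop :=
  exists2 p : {poly K}, p != 0 & Kpoly_eval p y = 0.

Definition in_Kx (x y : F) : Prop :=
  exists p q : {poly K}, Kpoly_eval q x != 0 /\ y = Kpoly_eval p x / Kpoly_eval q x.

(* F/K is an algebraic function field in one variable:
   F is a finite extension of K(x) for some x transcendental over K. *)
Definition function_field : Prop :=
  exists x : F, transcendental_over_K x /\
    exists s : seq F, forall y : F, exists c : seq F,
      [/\ size c = size s, (forall i, (i < size s)%N -> in_Kx x c`_i)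
        & y = \sum_(i < size s) c`_i * s`_i].

Definition full_constant_field : Prop :=
  forall y : F, algebraic_over_K y -> exists a : K, y = iota a.

(* Places of F/K are represented by their normalized discrete valuations
   (with the convention v 0 = 0; the value at 0 plays no role). *)
Record is_place (v : F -> int) : Prop := IsPlace {
  place_v0 : v 0 = 0;
  place_mul : forall x y, x != 0 -> y != 0 -> v (x * y) = v x + v y;
  place_add : forall x y, x != 0 -> y != 0 -> x + y != 0 ->
                Num.min (v x) (v y) <= v (x + y);
  place_const : forall a : K, a != 0 -> v (iota a) = 0;
  place_unif : exists t : F, v t = 1 }.

Definition place := {v : F -> int | is_place v}.
HB.instance Definition _ := gen_eqMixin place.
HB.instance Definition _ := gen_choiceMixin place.

Definition vP (P : place) : F -> int := proj1_sig P.

(* deg P = d : the residue field O_P / P has a K-basis of size d. *)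
Definition place_deg_is (P : place) (d : nat) : Prop :=
  exists b : 'I_d -> F,
  [/\ forall i, 0 <= vP P (b i),
      forall c : 'I_d -> K, (exists i, c i != 0) ->
        let z := \sum_i iota (c i) * b i in z != 0 /\ vP P z <= 0
    & forall y, 0 <= vP P y -> exists c : 'I_d -> K,
        let z := y - \sum_i iota (c i) * b i in z = 0 \/ 0 < vP P z].

Definition place_deg (P : place) : nat := the_nat (place_deg_is P).

(* Divisors: finitely supported functions places -> int; v_P(D) = D P. *)
Definition divisor := {fsfun place -> int with 0}.

Definition deg (D : divisor) : int :=
  \sum_(P <- finsupp D) D P * (place_deg P)%:Z.

Definition positive_div (D : divisor) : Prop := forall P, 0 <= D P.

Definition lin_equiv (D D' : divisor) : Prop :=
  exists f : F, f != 0 /\ forall P, D P - D' P = vP P f.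

Definition class_number (h : nat) : Prop :=
  exists Ds : 'I_h -> divisor,
  [/\ forall i, deg (Ds i) = 0,
      forall i j, i != j -> ~ lin_equiv (Ds i) (Ds j)
    & forall D, deg D = 0 -> exists i, lin_equiv D (Ds i)].

Definition LL (G : divisor) (f : F) : Prop :=
  f = 0 \/ forall P, - G P <= vP P f.

Definition zero_div (f : F) (P : place) : int := Num.max 0 (vP P f).

(* a = (a_l)_l are the coefficients of the local expansion
   f = sum_l a_l t^l at P (t a local parameter at P). *)
Definition is_local_expansion (P : place) (t f : F) (a : nat -> K) : Prop :=
  forall N : nat, let z := f - \sum_(l < N) iota (a l) * t ^+ l in
    z = 0 \/ (N%:Z <= vP P z).

Section RationalPlaces.
Variables (n m : nat) (Ps : 'I_n -> place).

Definition jl (D : place -> int) (l : nat) : nat :=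
  #|[set i : 'I_n | D (Ps i) == m%:Z - l%:Z]|.

Definition Jm (D : place -> int) : nat := (\sum_(1 <= l < m.+1) l.+1 * jl D l)%N.

(* deg(bar D) where bar D = sum_i min(m+1, v_{P_i}(D)) P_i, the P_i being
   rational (degree one) places *)
Definition degbar (D : place -> int) : int :=
  \sum_(i < n) Num.min (m.+1)%:Z (D (Ps i)).

Definition jcond (X : nat -> int) (D : place -> int) : Prop :=
  (forall l : nat, (1 <= l <= m)%N ->
     (jl D l)%:Z <= 2%:Z * X l + \sum_(l.+1 <= nu < m.+1) X nu)
  /\ (Jm D)%:Z <= 2%:Z * \sum_(1 <= l < m.+1) (l.+1)%:Z * X l.

Definition Vm (r s : nat) (X : nat -> int) (D : divisor) : Prop :=
  [/\ positive_div D, deg D = r%:Z, s%:Z <= degbar D & jcond X D].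

End RationalPlaces.
End FunctionField.

Section Codes.
Variables (K : finFieldType) (n m : nat).

(* Vectors of F_q^{mn}: alpha i j = alpha^{(i+1)}_{j+1}. *)
(* entry alpha^{(i)}_l for the 1-based index l (0 if out of range) *)
Definition ent (alpha : 'M[K]_(n, m)) (i : 'I_n) (l : nat) : K :=
  if insub (l.-1) is Some j then alpha i j else 0.

(* I_l(alpha), l 1-based *)
Definition Iset (alpha : 'M[K]_(n, m)) (l : nat) : {set 'I_n} :=
  [set i | [forall j : 'I_m, (l <= j)%N ==> (alpha i j == 0)] && (ent alpha i l != 0)].

(* M(x_1, ..., x_m; c) with X_l = floor (x_l n) *)
Definition Mset (X : nat -> int) (c : 'M[K]_(n, m)) : {set 'M[K]_(n, m)} :=
  [set alpha | [forall l : 'I_m, (#|Iset (alpha - c) l.+1|)%:Z <= X l.+1]].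

Definition hamming (u v : 'rV[K]_n) : nat := #|[set i | u 0 i != v 0 i]|.

Definition min_dist_ge (C : {set 'rV[K]_n}) (d : int) : Prop :=
  forall u v, u \in C -> v \in C -> u != v -> d <= (hamming u v)%:Z.

(* Phi(f) = (phi_1(f), ..., phi_n(f)), phi_i(f) = (f^{(m-1)}(P_i), ..., f^{(0)}(P_i)),
   i.e. alpha^{(i)}_{j} = f^{(m-j)}(P_i); coef i f l = f^{(l)}(P_i). *)
Definition Phi (F : Type) (coef : 'I_n -> F -> nat -> K) (f : F) : 'M[K]_(n, m) :=
  \matrix_(i, j) coef i f (m.-1 - j)%N.

Definition psi (F : Type) (coef : 'I_n -> F -> nat -> K) (f : F) : 'rV[K]_n :=
  \row_i coef i f m.

End Codes.

Definition Xfloor (R : realType) (n : nat) (x : nat -> R) (l : nat) : int :=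
  Num.floor (x l * n%:R).

(* Main.v *)
Require Import Defs.
From HB Require Import structures.
From mathcomp Require Import all_boot all_order all_algebra.
From mathcomp Require Import boolp reals.
From mathcomp Require Import finmap.
From mathcomp Require Import ring zify.
Import Order.TTheory GRing.Theory Num.Theory.
Local Open Scope ring_scope.
Set Implicit Arguments.
Unset Strict Implicit.

Section Val.
Variables (K : finFieldType) (F : fieldType) (iota : {rmorphism K -> F}).
Variable P : place iota.
Local Notation v := (vP P).

Lemma vP_is : is_place iota v.
Proof. exact: (proj2_sig P). Qed.

Lemma vN1 : v (-1) = 0.
Proof.
have H : (-1 : K) != 0 by rewrite oppr_eq0 oner_eq0.
by have := place_const vP_is H; rewrite rmorphN1.
Qed.

Lemma vN x : v (- x) = v x.
Proof.
have [->|x0] := eqVneq x 0; first by rewrite oppr0.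
rewrite -mulN1r (place_mul vP_is) ?vN1 ?add0r //.
by rewrite oppr_eq0 oner_eq0.
Qed.

Definition good (N : int) (z : F) := z = 0 \/ N <= v z.

Lemma goodD N x y : good N x -> good N y -> good N (x + y).
Proof.
have [->|x0] := eqVneq x 0; first by rewrite add0r.
have [->|y0] := eqVneq y 0; first by rewrite addr0.
have [->|s0] := eqVneq (x + y) 0; first by left.
move=> [/eqP|hx]; first by rewrite (negbTE x0).
move=> [/eqP|hy]; first by rewrite (negbTE y0).
right; apply: le_trans (place_add vP_is x0 y0 s0).
by rewrite le_min hx hy.
Qed.

Lemma goodN N x : good N x -> good N (- x).
Proof. by move=> [->|h]; [left; rewrite oppr0|right; rewrite vN]. Qed.

Lemma goodB N x y : good N x -> good N y -> good N (x - y).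
Proof. by move=> hx hy; apply: goodD; [exact: hx|exact: goodN]. Qed.

Lemma v_strict x y : x != 0 -> (y = 0 \/ v x < v y) -> v (x + y) = v x.
Proof.
move=> x0 [->|hy]; first by rewrite addr0.
have [->|y0] := eqVneq y 0; first by rewrite addr0.
have [e|s0] := eqVneq (x + y) 0.
  have ey : y = - x by rewrite -(addKr x y) e addr0.
  by move: hy; rewrite ey vN ltxx.
apply/eqP; rewrite eq_le; apply/andP; split; last first.
  have := place_add vP_is x0 y0 s0; apply: le_trans.
  by rewrite le_min lexx ltW.
have Ny0 : - y != 0 by rewrite oppr_eq0.
have := place_add vP_is s0 Ny0; rewrite addrK => /(_ x0).
move=> H; apply: contraTT H; rewrite -!ltNge lt_min vN => hxs; apply/andP; split => //.
Qed.

Lemma v_pow (t : F) k : v t = 1 -> v (t ^+ k) = k%:Z.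
Proof.
move=> ht; have t0 : t != 0 by apply/eqP=> e; move: ht; rewrite e (place_v0 vP_is).
elim: k => [|k IH].
  by rewrite expr0 -(rmorph1 iota) (place_const vP_is) ?oner_eq0.
rewrite exprS (place_mul vP_is) ?expf_neq0 // ht IH.
by rewrite -addn1 PoszD addrC.
Qed.
End Val.

Section Exp.
Variables (K : finFieldType) (F : fieldType) (iota : {rmorphism K -> F}).
Variable P : place iota.
Local Notation v := (vP P).
Variable t : F.
Hypothesis ht : v t = 1.

Lemma exp_sub f g a b : is_local_expansion P t f a -> is_local_expansion P t g b ->
  is_local_expansion P t (f - g) (fun l => a l - b l).
Proof.
move=> ha hb N /=.
have -> : f - g - \sum_(l < N) iota (a l - b l) * t ^+ l =
   (f - \sum_(l < N) iota (a l) * t ^+ l) - (g - \sum_(l < N) iota (b l) * t ^+ l).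
  rewrite [in RHS]opprB addrA.
  under eq_bigr do rewrite rmorphB mulrBl.
  rewrite sumrB; ring.
exact: goodB (ha N) (hb N).
Qed.

Lemma t_neq0 : t != 0.
Proof. by apply/eqP=> e; move: ht; rewrite e (place_v0 (vP_is P)). Qed.

Lemma sum_lead (a : nat -> K) k : (forall l, (l < k)%N -> a l = 0) ->
  \sum_(l < k.+1) iota (a l) * t ^+ l = iota (a k) * t ^+ k.
Proof.
move=> h; rewrite big_ord_recr /= big1 ?add0r // => l _.
by rewrite h // rmorph0 mul0r.
Qed.

Lemma v_mon c k : c != 0 -> v (iota c * t ^+ k) = k%:Z.
Proof.
move=> c0; rewrite (place_mul (vP_is P)) ?(place_const (vP_is P)) ?v_pow ?add0r //.
  by rewrite fmorph_eq0.
by rewrite expf_neq0 // t_neq0.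
Qed.

Lemma exp_val1 f a k : is_local_expansion P t f a ->
  (forall l, (l < k)%N -> a l = 0) -> a k != 0 -> v f = k%:Z.
Proof.
move=> ha hl hk; have := ha k.+1; rewrite /= sum_lead // => hz.
have -> : f = iota (a k) * t ^+ k + (f - iota (a k) * t ^+ k) by ring.
rewrite v_strict ?v_mon //.
by rewrite mulf_neq0 ?fmorph_eq0 ?expf_neq0 ?t_neq0.
Qed.

Lemma exp_val2 f a N : is_local_expansion P t f a -> f != 0 ->
  (forall l, (l < N)%N -> a l = 0) -> N%:Z <= v f.
Proof.
move=> ha f0 hl; have := ha N; rewrite /= big1 ?subr0.
  by case=> // /eqP; rewrite (negbTE f0).
by move=> l _; rewrite hl // rmorph0 mul0r.
Qed.

Lemma exp0 a : is_local_expansion P t 0 a -> forall l, a l = 0.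
Proof.
move=> ha.
suff H : forall k l, (l < k)%N -> a l = 0 by move=> l; exact: (H l.+1).
elim=> [//|k IH] l; rewrite ltnS leq_eqVlt => /orP[/eqP ->|]; last exact: IH.
apply/eqP; apply/negPn/negP => hk.
have := ha k.+1; rewrite /= sum_lead // sub0r.
case=> [/eqP|]; first by rewrite oppr_eq0 mulf_eq0 fmorph_eq0 (negbTE hk) expf_eq0 (negbTE t_neq0) andbF.
by rewrite vN v_mon // lez_nat ltnn.
Qed.

Lemma exp_unique f a b : is_local_expansion P t f a -> is_local_expansion P t f b ->
  forall l, a l = b l.
Proof.
move=> ha hb l; apply/eqP; rewrite -subr_eq0; apply/eqP.
by have := exp_sub ha hb; rewrite subrr => /exp0 ->.
Qed.

Lemma val_low f a k : is_local_expansion P t f a -> f != 0 -> v f = k%:Z ->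
  (forall l, (l < k)%N -> a l = 0) /\ a k != 0.
Proof.
move=> ha f0 hv.
have H : forall j, (j <= k)%N -> forall l, (l < j)%N -> a l = 0.
  elim=> [//|j IH] hj l; rewrite ltnS leq_eqVlt => /orP[/eqP ->|hl]; last first.
    exact: IH (ltnW hj) _ hl.
  apply/eqP; apply/negPn/negP => aj.
  have := exp_val1 ha (IH (ltnW hj)) aj; rewrite hv => -[e].
  by move: hj; rewrite e ltnn.
split; first exact: H.
apply/negP => /eqP ak.
suff : (k.+1)%:Z <= v f by rewrite hv lez_nat ltnn.
apply: (exp_val2 ha f0) => l; rewrite ltnS leq_eqVlt => /orP[/eqP ->//|]; exact: H.
Qed.
End Exp.

Lemma LLB (K : finFieldType) (F : fieldType) (iota : {rmorphism K -> F}) (G : divisor iota) f g : LL G f -> LL G g -> LL G (f - g).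
Proof.
move=> hf hg; have [e|nz] := eqVneq (f - g) 0; first by left.
right=> P.
have gf : good P (- G P) f by case: hf => [->|h]; [left|right; exact: h].
have gg : good P (- G P) g by case: hg => [->|h]; [left|right; exact: h].
by case: (goodB gf gg) => // /eqP; rewrite (negbTE nz).
Qed.

Section Comb.
Variables (K : finFieldType) (n m : nat).

Lemma ent_S (a : 'M[K]_(n, m)) i (j : 'I_m) : ent a i j.+1 = a i j.
Proof.
rewrite /ent /=; case: insubP => [j' _ e|]; last by rewrite ltn_ord.
by congr (a i _); apply: val_inj.
Qed.

Lemma IsetP (a : 'M[K]_(n, m)) i (l : 'I_m) :
  (i \in Iset a l.+1) = [forall j : 'I_m, (l.+1 <= j)%N ==> (a i j == 0)] && (a i l != 0).
Proof. by rewrite inE ent_S. Qed.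

Lemma Iset_diff (a b : 'M[K]_(n, m)) i (l : 'I_m) :
  i \in Iset (a - b) l.+1 ->
  [|| i \in Iset a l.+1, i \in Iset b l.+1 |
      [exists nu : 'I_m, [&& (l < nu)%N, i \in Iset a nu.+1 & i \in Iset b nu.+1]]].
Proof.
rewrite IsetP => /andP[/forallP hz hl].
have hz' : forall j : 'I_m, (l.+1 <= j)%N -> a i j = b i j.
  by move=> j lj; have := implyP (hz j) lj; rewrite !mxE subr_eq0 => /eqP.
case: (pickP (fun j : 'I_m => (l.+1 <= j)%N && (a i j != 0))) => [j0 hj0|h0].
  case: (@arg_maxnP _ j0 (fun j : 'I_m => (l.+1 <= j)%N && (a i j != 0)) (fun j : 'I_m => (j : nat)) hj0) => j1' /andP[lj1 aj1] mx.
  apply/orP; right; apply/orP; right; apply/existsP; exists j1'.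
  have bj : forall j : 'I_m, (j1' < j)%N -> a i j = 0.
    move=> j hj; apply/eqP; apply/negPn/negP => aj.
    have := mx j; rewrite aj andbT (leq_trans lj1 (ltnW hj)) => /(_ isT).
    by rewrite /geq /= leqNgt hj.
  rewrite lj1 !IsetP aj1 -(hz' _ lj1) aj1 !andbT /=; apply/andP; split.
    by apply/forallP=> j; apply/implyP=> hj; rewrite bj.
  apply/forallP=> j; apply/implyP=> hj.
  by rewrite -hz' ?bj // (leq_trans lj1 (ltnW hj)).
have az : forall j : 'I_m, (l.+1 <= j)%N -> a i j = 0.
  by move=> j lj; have := h0 j; rewrite lj /= => /negbFE/eqP.
move: hl; rewrite !mxE !IsetP.
have [al|al] := eqVneq (a i l) 0.
  rewrite al sub0r oppr_eq0 => bl; apply/orP; right; apply/orP; left.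
  rewrite bl andbT; apply/forallP=> j; apply/implyP=> hj.
  by rewrite -hz' // az.
move=> _; apply/orP; left; rewrite andbT.
by apply/forallP=> j; apply/implyP=> hj; rewrite az.
Qed.
End Comb.

Lemma card_ind n (A : pred 'I_n) : #|[set i | A i]| = (\sum_i (A i : nat))%N.
Proof.
rewrite -sum1_card big_mkcond /=; apply: eq_bigr => i _.
by rewrite inE; case: (A i).
Qed.

Lemma PoszS (I : Type) (r : seq I) (P : pred I) (G : I -> nat) :
  (\sum_(i <- r | P i) G i)%N%:Z = \sum_(i <- r | P i) (G i)%:Z.
Proof. by apply: (big_morph Posz PoszD). Qed.

Lemma sum_ge_term (G : nat -> nat) a b k : (a <= k < b)%N ->
  (G k <= \sum_(a <= j < b) G j)%N.
Proof.
move=> hk; rewrite (bigD1_seq k) ?mem_index_iota ?iota_uniq //=.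
exact: leq_addr.
Qed.

Section Count.
Variables (K : finFieldType) (F : fieldType) (iota : {rmorphism K -> F}).
Variables (n m : nat) (Ps : 'I_n -> place iota) (D : place iota -> int).
Variables (a b : 'M[K]_(n, m)) (X : nat -> int).
Hypothesis hA : forall l : 'I_m, (#|Iset a l.+1|)%:Z <= X l.+1.
Hypothesis hB : forall l : 'I_m, (#|Iset b l.+1|)%:Z <= X l.+1.
Hypothesis hE : forall i (l : 'I_m), D (Ps i) = m%:Z - (l.+1)%:Z -> i \in Iset (a - b) l.+1.

Lemma to_ord k : (1 <= k <= m)%N -> {l : 'I_m | k = l.+1}.
Proof.
case: k => // k /= km; exists (Ordinal km) => //.
Qed.

Lemma hAn k : (1 <= k <= m)%N -> (#|Iset a k|)%:Z <= X k.
Proof. by case/to_ord=> l ->. Qed.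
Lemma hBn k : (1 <= k <= m)%N -> (#|Iset b k|)%:Z <= X k.
Proof. by case/to_ord=> l ->. Qed.

Lemma hEn i k : (1 <= k <= m)%N -> D (Ps i) = m%:Z - k%:Z ->
  [|| i \in Iset a k, i \in Iset b k |
      [exists nu : 'I_m, [&& (k <= nu)%N, i \in Iset a nu.+1 & i \in Iset b nu.+1]]].
Proof. by case/to_ord=> l -> /hE /Iset_diff. Qed.

Lemma jl_sum k : jl m Ps D k = (\sum_i ((D (Ps i) == (m%:Z - k%:Z)%R) : nat))%N.
Proof. by rewrite /jl card_ind. Qed.

Lemma J1 k : (1 <= k <= m)%N ->
  (jl m Ps D k)%:Z <= 2%:Z * X k + \sum_(k.+1 <= nu < m.+1) X nu.
Proof.
move=> km.
have H : (jl m Ps D k <= #|Iset a k| + #|Iset b k| + \sum_(k.+1 <= nu < m.+1) #|Iset a nu|)%N.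
  rewrite jl_sum.
  have -> : #|Iset a k| = #|[set i | i \in Iset a k]| by apply: eq_card => i; rewrite inE.
  have -> : #|Iset b k| = #|[set i | i \in Iset b k]| by apply: eq_card => i; rewrite inE.
  have -> : (\sum_(k.+1 <= nu < m.+1) #|Iset a nu| =
             \sum_(k.+1 <= nu < m.+1) \sum_i ((i \in Iset a nu) : nat))%N.
    apply: eq_bigr => nu _; transitivity #|[set i | i \in Iset a nu]|; first by apply: eq_card => i; rewrite inE.
    exact: card_ind.
  rewrite !card_ind (exchange_big _ (index_iota _ _)) /= -!big_split /=.
  apply: leq_sum => i _.
  case: eqP => // /(hEn km) /orP[->|/orP[->|/existsP[nu /and3P[knu ha _]]]].
  - by rewrite -addnA leq_addr.
  - by rewrite addnAC leq_addl.
  - apply: leq_trans (leq_addl _ _).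
    have := @sum_ge_term (fun nu => ((i \in Iset a nu) : nat)) k.+1 m.+1 nu.+1.
    by rewrite /= ha ltnS knu ltnS ltn_ord => /(_ isT).
apply: le_trans (_ : (#|Iset a k| + #|Iset b k| + \sum_(k.+1 <= nu < m.+1) #|Iset a nu|)%N%:Z <= _).
  by rewrite lez_nat.
have -> : 2%:Z * X k = X k + X k by ring.
rewrite !PoszD PoszS -!addrA; apply: lerD.
  by apply: hAn.
apply: lerD; first exact: hBn.
apply: ler_sum_nat => nu /andP[k1 nu1]; apply: hAn.
by rewrite (leq_trans _ k1) //= -ltnS.
Qed.

Lemma Jm_alt : Jm m Ps D =
  (\sum_i \sum_(1 <= l < m.+1) l.+1 * ((D (Ps i) == (m%:Z - l%:Z)%R) : nat))%N.
Proof.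
rewrite /Jm (exchange_big _ (index_enum _)) /=; apply: eq_bigr => l _.
by rewrite jl_sum big_distrr.
Qed.

Lemma LHS_eq (e : int) l0 : (1 <= l0 <= m)%N -> e = m%:Z - l0%:Z ->
  (\sum_(1 <= l < m.+1) l.+1 * ((e == (m%:Z - l%:Z)%R) : nat))%N = l0.+1.
Proof.
move=> hl0 he; rewrite (bigD1_seq l0) ?mem_index_iota ?iota_uniq //=.
rewrite he eqxx muln1 big1_seq ?addn0 // => l /andP[hl _].
suff -> : (m%:Z - l0%:Z == m%:Z - l%:Z) = false by rewrite muln0.
apply/negbTE; apply: contra hl => /eqP /addrI /oppr_inj [] ->; by rewrite eqxx.
Qed.

Lemma LHS0 (e : int) : (forall l0, (1 <= l0 <= m)%N -> e <> m%:Z - l0%:Z) ->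
  (\sum_(1 <= l < m.+1) l.+1 * ((e == (m%:Z - l%:Z)%R) : nat))%N = 0%N.
Proof.
move=> h; rewrite big1_seq // => l /andP[_]; rewrite mem_index_iota ltnS => hl.
by case: eqP => [/h|]; rewrite ?muln0 //; apply.
Qed.

Lemma J2i i :
  (\sum_(1 <= l < m.+1) l.+1 * ((D (Ps i) == (m%:Z - l%:Z)%R) : nat) <=
   \sum_(1 <= l < m.+1) l.+1 * ((i \in Iset a l) + (i \in Iset b l)))%N.
Proof.
have [[l0 hl0 he]|nex] := pselect (exists2 l0, (1 <= l0 <= m)%N & D (Ps i) = m%:Z - l0%:Z).
  rewrite (LHS_eq hl0 he).
  have hl0' : (1 <= l0 < m.+1)%N by rewrite ltnS.
  pose G := fun l => (l.+1 * ((i \in Iset a l) + (i \in Iset b l)))%N.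
  case/orP: (hEn hl0 he) => [ha|/orP[hb|/existsP[nu /and3P[knu ha _]]]].
  - apply: (leq_trans _ (sum_ge_term G hl0')); rewrite /G ha; exact: leq_pmulr.
  - apply: (leq_trans _ (sum_ge_term G hl0')); rewrite /G hb addnC; exact: leq_pmulr.
  - have hnu : (1 <= nu.+1 < m.+1)%N by rewrite /= ltnS ltn_ord.
    apply: (leq_trans _ (sum_ge_term G hnu)); rewrite /G ha.
    apply: (@leq_trans nu.+2); [by rewrite ltnS ltnW | exact: leq_pmulr].
rewrite LHS0 // => l0 hl0 he; apply: nex; by exists l0.
Qed.

Lemma J2 : (Jm m Ps D)%:Z <= 2%:Z * \sum_(1 <= l < m.+1) (l.+1)%:Z * X l.
Proof.
have H : (Jm m Ps D <= \sum_(1 <= l < m.+1) l.+1 * (#|Iset a l| + #|Iset b l|))%N.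
  rewrite Jm_alt; apply: leq_trans; first by apply: leq_sum => i _; exact: J2i i.
  rewrite (exchange_big _ (index_enum _)) /= leq_eqVlt; apply/orP; left; apply/eqP.
  apply: eq_bigr => l _; rewrite -big_distrr /=; congr (_ * _)%N.
  rewrite big_split /=; congr (_ + _)%N.
    transitivity #|[set i | i \in Iset a l]|; last by apply: eq_card => i; rewrite inE.
    by rewrite card_ind.
  transitivity #|[set i | i \in Iset b l]|; last by apply: eq_card => i; rewrite inE.
  by rewrite card_ind.
apply: le_trans (_ : (\sum_(1 <= l < m.+1) l.+1 * (#|Iset a l| + #|Iset b l|))%N%:Z <= _).
  by rewrite lez_nat.
rewrite PoszS mulr_sumr; apply: ler_sum_nat => l hl.
rewrite PoszM PoszD.
have -> : 2%:Z * ((l.+1)%:Z * X l) = (l.+1)%:Z * (X l + X l) by ring.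
by rewrite ler_wpM2l // lerD ?hAn ?hBn.
Qed.

Lemma Dlem : (forall i, 0 <= D (Ps i)) ->
  ((m + 1) * n)%N%:Z <= degbar m Ps D + (#|[set i | D (Ps i) == m%:Z]|)%:Z + (Jm m Ps D)%:Z.
Proof.
move=> hpos.
have -> : ((m + 1) * n)%N%:Z = \sum_(i < n) (m.+1)%:Z.
  by rewrite -PoszS sum_nat_const card_ord mulnC addn1.
rewrite card_ind Jm_alt !PoszS /degbar -!big_split /=.
apply: ler_sum => i _.
move: (hpos i); case: (D (Ps i)) => // e _.
have [hm|hm] := leqP m.+1 e.
  rewrite (_ : Num.min _ _ = (m.+1)%:Z); last by apply/min_idPl; rewrite lez_nat.
  by rewrite -addrA lerDl.
rewrite (_ : Num.min _ _ = e%:Z); last by apply/min_idPr; rewrite lez_nat ltnW.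
move: hm; rewrite ltnS leq_eqVlt => /orP[/eqP ->|hm].
  rewrite eqxx; lia.
have hl0 : (1 <= m - e <= m)%N by rewrite subn_gt0 hm leq_subr.
have he : e%:Z = m%:Z - (m - e)%N%:Z by lia.
rewrite (LHS_eq hl0 he); lia.
Qed.
End Count.

Lemma has_card_uniq (T : eqType) (A : T -> Prop) k1 k2 :
  has_card A k1 -> has_card A k2 -> k1 = k2.
Proof.
move=> [s1 [u1 h1 <-]] [s2 [u2 h2 <-]]; apply: perm_size; apply: uniq_perm => // y.
apply/idP/idP => hy; [apply/h2; apply/h1 | apply/h1; apply/h2] => //.
Qed.

Lemma fincardE (T : eqType) (A : T -> Prop) k : has_card A k -> fincard A = k.
Proof.
move=> hk; rewrite /fincard /the_nat; case: pselect => [e|ne]; last first.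
  by exfalso; apply: ne; exists k.
by case: (cid e) => k' hk' /=; exact: has_card_uniq hk' hk.
Qed.

Lemma fincard_pos (T : eqType) (A : T -> Prop) : (0 < fincard A)%N -> has_card A (fincard A).
Proof.
rewrite /fincard /the_nat; case: pselect => [e|//].
by case: (cid e).
Qed.

Lemma core (K : finFieldType) (F : fieldType) (iota : {rmorphism K -> F})
  (n m : nat) (Ps : 'I_n -> place iota) (t : 'I_n -> F)
  (Ht : forall i, vP (Ps i) (t i) = 1)
  (G : divisor iota) (HGsupp : forall i, G (Ps i) = 0)
  (coef : 'I_n -> F -> nat -> K)
  (Hcoef : forall i f, LL G f -> is_local_expansion (Ps i) (t i) f (coef i f))
  (X : nat -> int) (c : 'M[K]_(n, m)) (s : nat)
  (HG : forall f : F, LL G f -> f != 0 ->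
          jcond m Ps X (zero_div f) -> degbar m Ps (zero_div f) <= s%:Z - 1)
  f g (Lf : LL G f) (Lg : LL G g)
  (Mf : Phi m coef f \in Mset X c) (Mg : Phi m coef g \in Mset X c) (fg : f != g) :
  ((m + 1) * n + 1)%N%:Z - s%:Z - 2%:Z * \sum_(1 <= l < m.+1) (l.+1)%:Z * X l
    <= (hamming (psi m coef f) (psi m coef g))%:Z.
Proof.
set h := f - g.
have Lh : LL G h by exact: LLB.
have h0 : h != 0 by rewrite subr_eq0.
have lin : forall i k, coef i h k = coef i f k - coef i g k.
  move=> i k; exact: (exp_unique (Ht i) (Hcoef i h Lh) (exp_sub (Hcoef i f Lf) (Hcoef i g Lg)) k).
set a := Phi m coef f - c; set b := Phi m coef g - c.
have abh : a - b = Phi m coef h.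
  by apply/matrixP => i j; rewrite !mxE lin; ring.
have hA : forall l : 'I_m, (#|Iset a l.+1|)%:Z <= X l.+1.
  by move: Mf; rewrite inE => /forallP.
have hB : forall l : 'I_m, (#|Iset b l.+1|)%:Z <= X l.+1.
  by move: Mg; rewrite inE => /forallP.
pose D := @zero_div K F iota h.
have vpos : forall i, 0 <= vP (Ps i) h.
  move=> i; case: Lh => [/eqP|H]; first by rewrite (negbTE h0).
  by have := H (Ps i); rewrite HGsupp oppr0.
have Dv : forall i, D (Ps i) = vP (Ps i) h.
  by move=> i; rewrite /D /zero_div; apply/max_idPr; exact: vpos.
have hpos : forall i, 0 <= D (Ps i) by move=> i; rewrite Dv.
have hE : forall i (l : 'I_m), D (Ps i) = m%:Z - (l.+1)%:Z -> i \in Iset (a - b) l.+1.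
  move=> i l; rewrite Dv => hv0.
  have hv : vP (Ps i) h = (m - l.+1)%N%:Z by rewrite hv0; have := ltn_ord l; lia.
  have [hz hnz] := val_low (Ht i) (Hcoef i h Lh) h0 hv.
  rewrite abh IsetP; apply/andP; split.
    apply/forallP=> j; apply/implyP=> lj; rewrite mxE hz //.
    have := ltn_ord j; lia.
  rewrite mxE; congr (coef i h _ != 0): hnz; lia.
have HJ : jcond m Ps X D.
  split; [move=> k km; exact: J1 hA hB hE k km | exact: J2 hA hB hE].
have Hdeg : degbar m Ps D <= s%:Z - 1 := HG h Lh h0 HJ.
have HD := Dlem m hpos.
have HJ2 := J2 hA hB hE.
have Hham : (#|[set i | D (Ps i) == m%:Z]| <= hamming (psi m coef f) (psi m coef g))%N.
  apply: subset_leq_card; apply/subsetP => i; rewrite !inE Dv => /eqP hv.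
  have [_ hnz] := val_low (Ht i) (Hcoef i h Lh) h0 hv.
  by rewrite !mxE; move: hnz; rewrite lin subr_eq0.
move: Hham; rewrite -lez_nat; lia.
Qed.
Unset Implicit Arguments.
Set Strict Implicit.
Theorem theorem2p9
  (K : finFieldType) (F : fieldType) (iota : {rmorphism K -> F})
  (HFF : function_field iota) (Hconst : full_constant_field iota)
  (n m : nat) (Hn : (1 <= n)%N) (Hm : (1 <= m)%N)
  (Ps : 'I_n -> place iota) (HPinj : injective Ps)
  (HPrat : forall i, place_deg (Ps i) = 1%N)
  (h : nat) (Hh : class_number iota h)
  (t : 'I_n -> F) (Ht : forall i, vP (Ps i) (t i) = 1)
  (r s : nat) (Hsr : (s <= r)%N)
  (R : realType) (x : nat -> R)
  (Hx0 : forall l, (1 <= l <= m)%N -> 0 <= x l)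
  (Hx1 : \sum_(1 <= l < m.+1) x l <= 1)
  (HV : (fincard (Vm m Ps r s (Xfloor n x)) < h)%N)
  (G : divisor iota) (HGdeg : deg G = r%:Z) (HGsupp : forall i, G (Ps i) = 0)
  (HG : forall f : F, LL G f -> f != 0 ->
          jcond m Ps (Xfloor n x) (zero_div f) ->
          degbar m Ps (zero_div f) <= s%:Z - 1)
  (coef : 'I_n -> F -> nat -> K)
  (Hcoef : forall i f, LL G f -> is_local_expansion (Ps i) (t i) f (coef i f))
  (HLM : (#|K| ^ (m * n) < fincard (LL G) * #|Mset (Xfloor n x) (0 : 'M[K]_(n, m))|)%N)
  (Hlen : s%:Z + 2%:Z * \sum_(1 <= l < m.+1) (l.+1)%:Z * Xfloor n x l
            <= ((m + 1) * n)%N%:Z)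
  (c : 'M[K]_(n, m))
  (HNc : ((fincard (LL G) * #|Mset (Xfloor n x) (0 : 'M[K]_(n, m))|)%N%:R / (#|K| ^ (m * n))%N%:R : R)
         <= (fincard (fun f => LL G f /\ Phi m coef f \in Mset (Xfloor n x) c))%:R) :
  let C : {set 'rV[K]_n} :=
    [set u : 'rV[K]_n | `[< exists f, (LL G f /\ Phi m coef f \in Mset (Xfloor n x) c)
                           /\ psi m coef f = u >]] in
  Num.ceil ((fincard (LL G) * #|Mset (Xfloor n x) (0 : 'M[K]_(n, m))|)%N%:R / (#|K| ^ (m * n))%N%:R : R)
    <= (#|C|)%:Z
  /\ min_dist_ge C (((m + 1) * n + 1)%N%:Z - s%:Z
                    - 2%:Z * \sum_(1 <= l < m.+1) (l.+1)%:Z * Xfloor n x l).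
Proof.
move=> C.
set X := Xfloor n x.
have Lpos : (0 < fincard (LL G))%N.
  by rewrite lt0n; apply/eqP => e; move: HLM; rewrite e mul0n ltn0.
have [sL [uL hL szL]] := fincard_pos Lpos.
pose sN := [seq f <- sL | Phi m coef f \in Mset X c].
have hN : has_card (fun f => LL G f /\ Phi m coef f \in Mset X c) (size sN).
  exists sN; split => //; first exact: filter_uniq.
  move=> f; rewrite mem_filter; split.
    by move=> /andP[Mf /hL Lf].
  by move=> [/hL Lf Mf]; rewrite Mf.
have fN := fincardE hN.
have ham0 : forall u : 'rV[K]_n, hamming u u = 0%N.
  move=> u; rewrite /hamming; apply/eqP; rewrite cards_eq0; apply/eqP/setP => i.
  by rewrite !inE eqxx.
have inj : {in sN &, injective (psi m coef)}.
  move=> f g; rewrite !mem_filter => /andP[Mf /hL Lf] /andP[Mg /hL Lg] e.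
  apply/eqP; apply/negPn/negP => fg.
  have := core Ht HGsupp Hcoef HG Lf Lg Mf Mg fg; rewrite e ham0.
  move: Hlen; lia.
have Ccard : (size sN <= #|C|)%N.
  rewrite -(size_map (psi m coef)) cardE; apply: uniq_leq_size.
    by rewrite map_inj_in_uniq // filter_uniq.
  move=> u /mapP[f hf ->]; rewrite mem_enum /C inE; apply/asboolP; exists f; split=> //.
  by move: hf; rewrite mem_filter => /andP[Mf /hL Lf].
split.
  rewrite ceil_le_int; apply: le_trans HNc _; rewrite fN.
  by rewrite -pmulrn ler_nat.
move=> u v; rewrite /C !inE => /asboolP[f [[Lf Mf] <-]] /asboolP[g [[Lg Mg] <-]] uv.
have fg : f != g by apply: contra uv => /eqP ->.
exact: (core Ht HGsupp Hcoef HG Lf Lg Mf Mg fg).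
Qed.
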